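(* Let $G$ be a finite group with $G=\langle x,y\rangle$, where $x$ has order $4$, $y$ has order at least $5$, and $xy$ has order at least $3$. Then $\mathrm{Cay}(G,\{x,y\})$ is an oriented regular representation (ORR) of $G$, unless $y$ has order $12$, $x=y^9$, and $G\cong\mathbb{Z}_{12}$.
   Context: For a group $G$ and $S\subseteq G$, the Cayley digraph $\mathrm{Cay}(G,S)$ has vertex set $G$, and $(u,v)$ is an arc whenever $vu^{-1}\in S$. Its automorphism group consists of the permutations of $G$ preserving the arc set, and always contains the right regular representation of $G$. $\mathrm{Cay}(G,S)$ is an oriented regular representation (ORR) if its automorphism group equals the right regular representation of $G$ and it is a proper digraph, i.e. $(u,v)$ being an arc implies $(v,u)$ is not an arc (equivalently $S\cap S^{-1}=\emptyset$). *)

(* Defs.v *)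
From mathcomp Require Import all_boot all_fingroup all_algebra.
Set Implicit Arguments. Unset Strict Implicit. Unset Printing Implicit Defensive.
Import GroupScope.
Local Open Scope group_scope.

Definition cay_arc (gT : finGroupType) (S : {set gT}) (u v : gT) : bool :=
  v * u^-1 \in S.

Definition cay_aut (gT : finGroupType) (G : {group gT}) (S : {set gT})
    (f : gT -> gT) : Prop :=
  [/\ {in G &, injective f}, f @: G = G &
      {in G &, forall u v, cay_arc S (f u) (f v) = cay_arc S u v}].

(* Cay(G,S) is an ORR: proper digraph (S and S^-1 disjoint) and every
   automorphism is a right translation u |-> u * g with g \in G. *)
Definition is_ORR (gT : finGroupType) (G : {group gT}) (S : {set gT}) : Prop :=
  [disjoint S & S^-1] /\
  (forall f : gT -> gT, cay_aut G S f ->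
     exists2 g, g \in G & {in G, forall u, f u = u * g}).

(* Main.v *)
Require Import Defs.
From mathcomp Require Import all_boot all_fingroup all_algebra.
From mathcomp Require Import all_solvable.
Local Open Scope group_scope.

Section Aux.
Variable gT : finGroupType.
Implicit Types a b c d x y : gT.

Lemma rot1 {a b : gT} : a * b = 1 -> b * a = 1.
Proof. move=> e; have -> : b = a^-1 by rewrite -[b](mulKg a) e mulg1. by rewrite mulVg. Qed.

Lemma solve_r {a b : gT} : a * b = 1 -> b = a^-1.
Proof. by move=> e; rewrite -[b](mulKg a) e mulg1. Qed.

Lemma rot4 {a b c d : gT} : a * b * c * d = 1 -> b * c * d * a = 1.
Proof. by rewrite -!mulgA => /rot1; rewrite !mulgA. Qed.

Lemma ord_le x n : 0 < n -> x ^+ n = 1 -> #[x] <= n.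
Proof. by move=> n0 e; apply: dvdn_leq => //; rewrite order_dvdn e. Qed.

Lemma x4 {x : gT} : #[x] = 4 -> x ^+ 4 = 1.
Proof. by move=> <-; rewrite expg_order. Qed.

Lemma pow4 x : x ^+ 4 = x * x * x * x.
Proof. by rewrite !expgS expg0 !mulg1 !mulgA. Qed.

Lemma word_lem x y s1 s2 s3 :
  #[x] = 4 -> 5 <= #[y] -> 3 <= #[x * y] -> x != (y ^+ 3)^-1 ->
  s1 \in [set x; y] -> s2 \in [set x; y] -> s3 \in [set x; y] ->
  s3 * s2 * s1 * y != 1.
Proof.
move=> ox oy oxy nx /set2P h1 /set2P h2 /set2P h3; apply/eqP.
have X4 := x4 ox.
have y4 : y ^+ 4 = 1 -> False.
  by move=> e4; have := @ord_le y 4 isT e4; rewrite leqNgt oy.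
have D : x * y * y * y = 1 -> False.
  rewrite -!mulgA => e3; move: nx; rewrite (solve_r (rot1 e3)) /= !expgS expg0 mulg1 mulgA.
  by rewrite eqxx.
have A : x * x * x * y = 1 -> False.
  move=> e; have : x * x * x * y = x * x * x * x by rewrite e -pow4 X4.
  by move/mulgI=> yx; move: oy; rewrite yx ox.
have B : x * x * y * y = 1 -> False.
  rewrite -[x * x * y * y]mulgA => /solve_r e; apply: y4.
  rewrite pow4 -[y * y * y * y]mulgA e -invMg.
  by rewrite mulgA -pow4 X4 invg1.
have C : x * y * x * y = 1 -> False.
  move=> e; have : (x * y) ^+ 2 = 1 by rewrite expgS expg1 mulgA.
  by move=> e2; have := @ord_le (x * y) 2 isT e2; rewrite leqNgt oxy.
move: h1 h2 h3 => [] -> [] -> [] ->.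
- exact: A.
- by move/rot4; apply: B.
- exact: C.
- by move/rot4/rot4; apply: D.
- exact: B.
- by move/rot4; apply: D.
- exact: D.
- by rewrite -pow4.
Qed.
End Aux.
Arguments x4 {gT x}. Arguments solve_r {gT a b}. Arguments rot1 {gT a b}. Arguments word_lem {gT x y s1 s2 s3}.

Lemma key12 n : n %| 12 -> 4 < n -> n %/ gcdn n 3 = 4 -> n = 12.
Proof.
move=> h1 h2 h3; have := @dvdn_leq n 12 isT h1; move: h1 h2 h3.
by do 13!(case: n => [//|n]).
Qed.

Theorem lemma2p5 (gT : finGroupType) (G : {group gT}) (x y : gT) :
  G :=: <<[set x; y]>> ->
  #[x] = 4%N -> (5 <= #[y])%N -> (3 <= #[x * y])%N ->
  ~ [/\ #[y] = 12%N, x = y ^+ 9 & G \isog Zp 12] ->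
  is_ORR G [set x; y].
Proof.
move=> GE ox oy oxy nexc.
have xG : x \in G by rewrite GE mem_gen // !inE eqxx.
have yG : y \in G by rewrite GE mem_gen // !inE eqxx orbT.
have X4 := x4 ox.
have nx : x != (y ^+ 3)^-1.
  apply/negP => /eqP ex; apply: nexc.
  have y12 : y ^+ 12 = 1.
    by rewrite (expgnA y 3 4) -[y ^+ 3]invgK -ex expVgn X4 invg1.
  have oy12 : #[y] = 12.
    apply: key12 => //; first by rewrite order_dvdn y12.
    by rewrite -orderXgcd -orderV -ex ox.
  have x9 : x = y ^+ 9.
    rewrite ex; apply/esym/solve_r; apply: rot1.
    by rewrite -expgnDr.
  have GY : G :=: <[y]>.
    apply/eqP; rewrite eqEsubset cycle_subG yG andbT GE gen_subG.
    by apply/subsetP => z; rewrite !inE => /orP [] /eqP ->;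
      [rewrite x9 mem_cycle | rewrite cycle_id].
  split => //.
  by rewrite GY isog_sym -oy12; exact: Zp_isog.
split.
  apply/pred0P => z /=; rewrite !inE.
  have nxx : x^-1 != x.
    apply/eqP => e; have : x ^+ 2 = 1 by rewrite expgS expg1 -{1}e mulVg.
    by move=> e2; have := @ord_le _ x 2 isT e2; rewrite ox.
  have nyy : y^-1 != y.
    apply/eqP => e; have : y ^+ 2 = 1 by rewrite expgS expg1 -{1}e mulVg.
    by move=> e2; have := @ord_le _ y 2 isT e2; rewrite leqNgt (leq_trans _ oy).
  have nxy : x^-1 != y.
    apply/eqP => e; have : (x * y) ^+ 1 = 1 by rewrite expg1 -e mulgV.
    by move=> e2; have := @ord_le _ (x * y) 1 isT e2; rewrite leqNgt (leq_trans _ oxy).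
  have nyx : y^-1 != x.
    by apply: contra nxy => /eqP <-; rewrite invgK.
  apply/negbTE; apply/negP => /andP [] /orP [] /eqP -> /orP [] /eqP e.
  - by move: nxx; rewrite e eqxx.
  - by move: nxy; rewrite e eqxx.
  - by move: nyx; rewrite e eqxx.
  - by move: nyy; rewrite e eqxx.
move=> f [finj fG farc].
have fGG : forall u, u \in G -> f u \in G.
  by move=> u uG; rewrite -fG; apply: imset_f.
have step : forall u s, u \in G -> s \in [set x; y] ->
    exists2 t, t \in [set x; y] & f (s * u) = t * f u.
  move=> u s uG sS.
  have sG : s \in G by case/set2P: sS => ->.
  have := farc u (s * u) uG (groupM sG uG); rewrite /cay_arc mulgK sS => h.
  by exists (f (s * u) * (f u)^-1) => //; rewrite mulgVK.
have xxG : forall u, u \in G -> x * u \in G by move=> u uG; rewrite groupM.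
have ind : forall u, u \in G -> forall g, f u = u * g ->
    f (x * u) = x * u * g /\ f (y * u) = y * u * g.
  move=> u uG g fu.
  have xS : x \in [set x; y] by rewrite !inE eqxx.
  have yS : y \in [set x; y] by rewrite !inE eqxx orbT.
  have fx : f (x * u) = x * u * g.
    have [t1 t1S e1] := step u x uG xS.
    case/set2P: t1S e1 => ->; first by rewrite fu mulgA.
    move=> e1; exfalso.
    have [t2 t2S e2] := step (x * u) x (xxG _ uG) xS.
    have [t3 t3S e3] := step (x * (x * u)) x (xxG _ (xxG _ uG)) xS.
    have [t4 t4S e4] := step (x * (x * (x * u))) x (xxG _ (xxG _ (xxG _ uG))) xS.
    have : x * (x * (x * (x * u))) = u by rewrite !mulgA -pow4 X4 mul1g.
    move=> e; rewrite e e3 e2 e1 !mulgA in e4.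
    have := word_lem ox oy oxy nx t2S t3S t4S; rewrite -[t4 * t3 * t2 * y](mulgK (f u)).
    by rewrite -e4 mulgV eqxx.
  split => //.
  have [t1 t1S e1] := step u y uG yS.
  case/set2P: t1S e1 => ->; last by rewrite fu mulgA.
  move=> e1; exfalso.
  have : f (y * u) = f (x * u) by rewrite e1 fx fu mulgA.
  move/finj => /(_ (groupM yG uG) (xxG _ uG)) /mulIg yx.
  by move: oy; rewrite yx ox.
have g0 : f 1 \in G by apply: fGG.
exists (f 1) => // u; rewrite GE => /gen_prodgP [n [c cS ->]].
elim: n c cS => [|n IH] c cS; first by rewrite big_ord0 mul1g.
rewrite big_ord_recl.
have cG : forall i, c i \in G by move=> i; case/set2P: (cS i) => ->.
have pG : \prod_(i < n) c (lift ord0 i) \in G.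
  by apply: group_prod => i _; apply: cG.
have [hx hy] := ind _ pG (f 1) (IH _ (fun i => cS (lift ord0 i))).
by case/set2P: (cS ord0) => ->; [rewrite hx | rewrite hy].
Qed.
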